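(* Let $G=(V,E)$ be a connected undirected graph (parallel edges allowed) with reactances $r_e>0$ and admittance matrix $\mathbf{A}$, $\vec{\theta}\in\mathbb{R}^V$, $\vec{p}=\mathbf{A}\vec{\theta}$. Let $H=(V_H,E_H)$ be a subgraph of $G$, $F\subseteq E_H$, $\mathbf{A}'$ the admittance matrix of $G'=(V,E\setminus F)$ (assumed connected), and $\vec{\theta}'$ with $\mathbf{A}'\vec{\theta}'=\vec{p}$. Suppose a data replay attack: there are $\vec{\theta}'',\vec{p}''\in\mathbb{R}^V$ with $\mathbf{A}\vec{\theta}''=\vec{p}''$ and $p''_v=p_v$ for all $v\in V_H$, and the observed vector $\vec{\theta}^{\star}$ satisfies $\theta^{\star}_v=\theta''_v$ for $v\in V_H$ and $\theta^{\star}_v=\theta'_v$ for $v\notin V_H$. Then for every $i\in\mathrm{int}(H)\cup\mathrm{int}(\bar H)$, $\mathbf{A}_i\vec{\theta}^{\star}=p_i$.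
   Context: Admittance matrix: for $u\neq v$, $a_{uv}=-\sum_e 1/r_e$ over edges joining $u,v$ ($0$ if none), $a_{uu}=-\sum_{w\neq u}a_{uw}$; $\mathbf{A}_i$ is its $i$-th row. $\bar H$ is the subgraph induced by $V\setminus V_H$. For a subgraph $S$ with node set $V_S$, $\mathrm{int}(S)=\{i\in V_S: N(i)\subseteq V_S\}$ with $N(i)$ the neighbors of $i$ in $G$. *)

(* Defs.v *)
From HB Require Import structures.
From mathcomp Require Import all_boot all_order all_algebra.
Set Implicit Arguments. Unset Strict Implicit. Unset Printing Implicit Defensive.
Import Order.TTheory GRing.Theory Num.Theory.
Local Open Scope ring_scope.

(* A multigraph on vertex type V with edge type E: each edge e has an
   (unordered) pair of endpoints ends e. A graph on V is given by a set of
   edges S : {set E}; G itself uses all edges [set: E]. *)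

Definition joins (V E : finType) (ends : E -> V * V) (e : E) (u v : V) : bool :=
  (((ends e).1 == u) && ((ends e).2 == v)) || (((ends e).1 == v) && ((ends e).2 == u)).

Definition adj (V E : finType) (ends : E -> V * V) (S : {set E}) : rel V :=
  fun u v => [exists e in S, joins ends e u v].

Definition connected_graph (V E : finType) (ends : E -> V * V) (S : {set E}) : Prop :=
  forall u v : V, connect (adj ends S) u v.

Definition adm_off (R : realFieldType) (V E : finType) (ends : E -> V * V)
  (r : E -> R) (S : {set E}) (u v : V) : R :=
  - \sum_(e in S | joins ends e u v) (r e)^-1.

Definition admittance (R : realFieldType) (V E : finType) (ends : E -> V * V)
  (r : E -> R) (S : {set E}) (u v : V) : R :=
  if u == v then - \sum_(w | w != u) adm_off ends r S u w
  else adm_off ends r S u v.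

Definition row_app (R : realFieldType) (V : finType) (A : V -> V -> R)
  (i : V) (theta : V -> R) : R :=
  \sum_(j : V) A i j * theta j.

Definition nbrs (V E : finType) (ends : E -> V * V) (i : V) : {set V} :=
  [set j | (j != i) && [exists e, joins ends e i j]].

Definition interior (V E : finType) (ends : E -> V * V) (VS : {set V}) : {set V} :=
  [set i in VS | nbrs ends i \subset VS].

(* Main.v *)
Require Import Defs.
From HB Require Import structures.
From mathcomp Require Import all_boot all_order all_algebra.
Import Order.TTheory GRing.Theory Num.Theory.
Local Open Scope ring_scope.

Lemma adm_zero (R : realFieldType) (V E : finType) (ends : E -> V * V)
  (r : E -> R) (S : {set E}) (i j : V) :
  j != i -> j \notin nbrs ends i -> admittance ends r S i j = 0.
Proof.
move=> hji hn; rewrite /admittance eq_sym (negbTE hji) /adm_off.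
rewrite big1 ?oppr0 // => e /andP[_ he].
by move: hn; rewrite inE hji /=; case/existsP; exists e.
Qed.

Theorem lemma5p5 (R : realFieldType) (V E : finType) (ends : E -> V * V)
  (r : E -> R) (hr : forall e, 0 < r e)
  (hconn : connected_graph ends [set: E])
  (theta p : V -> R)
  (hp : forall i, p i = row_app (admittance ends r [set: E]) i theta)
  (VH : {set V}) (EH : {set E})
  (hH : forall e, e \in EH -> ((ends e).1 \in VH) && ((ends e).2 \in VH))
  (F : {set E}) (hF : F \subset EH)
  (hconn' : connected_graph ends (~: F))
  (theta' : V -> R)
  (htheta' : forall i, row_app (admittance ends r (~: F)) i theta' = p i)
  (theta'' p'' : V -> R)
  (htheta'' : forall i, row_app (admittance ends r [set: E]) i theta'' = p'' i)
  (hp'' : forall v, v \in VH -> p'' v = p v)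
  (thstar : V -> R)
  (hstarH : forall v, v \in VH -> thstar v = theta'' v)
  (hstarN : forall v, v \notin VH -> thstar v = theta' v) :
  forall i, i \in interior ends VH :|: interior ends (~: VH) ->
    row_app (admittance ends r [set: E]) i thstar = p i.
Proof.
move=> i; rewrite inE => /orP[] hi.
- move: hi; rewrite inE => /andP[hiV hsub].
  rewrite -hp'' // -htheta'' /row_app; apply: eq_bigr => j _.
  have [->|hji] := eqVneq j i; first by rewrite hstarH.
  case hn: (j \in nbrs ends i).
    by rewrite hstarH //; apply: (subsetP hsub).
  by rewrite adm_zero ?hn // !mul0r.
- move: hi; rewrite inE => /andP[hiV hsub].
  rewrite inE in hiV.
  have hA : forall j, admittance ends r [set: E] i j = admittance ends r (~: F) i j.
    have ho : forall w, adm_off ends r [set: E] i w = adm_off ends r (~: F) i w.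
      move=> w; rewrite /adm_off; congr (- _); apply: eq_bigl => e.
      rewrite in_setT inE /=; case hj: (joins ends e i w); rewrite ?andbT ?andbF //.
      case heF: (e \in F) => //; have := hH e (subsetP hF e heF).
      move: hj; rewrite /joins => /orP[] /andP[/eqP h1 /eqP h2];
        rewrite h1 h2 (negbTE hiV) ?andbF //.
    move=> j; rewrite /admittance; case: (i == j) => //.
    by congr (- _); apply: eq_bigr => w _.
  rewrite -htheta' /row_app; apply: eq_bigr => j _.
  rewrite hA.
  have [->|hji] := eqVneq j i; first by rewrite hstarN.
  case hn: (j \in nbrs ends i).
    rewrite hstarN //; have := subsetP hsub j hn; by rewrite inE.
  by rewrite adm_zero ?hn // !mul0r.
Qed.
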